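(* Under Assumptions (M), (P) and (L), there exists a deterministic constant $L_h'$ such that $\|h(w_1)-h(w_2)\|\le L_h'\|w_1-w_2\|$ for all $w_1,w_2\in\mathbb R^d$.
   Context: Let $\langle\cdot,\cdot\rangle$ be an inner product on $\mathbb R^d$ with induced norm $\|\cdot\|$. Let $\mathcal Y$ be a finite set and $H:\mathbb R^d\times\mathcal Y\to\mathbb R^d$. (M) There is a family $\{P_w:w\in\mathbb R^d\}$ of $|\mathcal Y|\times|\mathcal Y|$ stochastic matrices such that for every $P$ in the closure of this family, the time-homogeneous Markov chain with transition matrix $P$ is irreducible and aperiodic. Then each $P_w$ has a unique stationary distribution $d_{\mathcal Y,w}$; define $h(w)\doteq\sum_{y\in\mathcal Y}d_{\mathcal Y,w}(y)H(w,y)$. (P) There is a constant $C_P$ such that $\|P_{w_1}-P_{w_2}\|\le\frac{C_P}{1+\|w_1\|+\|w_2\|}\|w_1-w_2\|$ for all $w_1,w_2$ (for a fixed matrix norm). (L) There is a constant $L_h$ with $\|H(w_1,y)-H(w_2,y)\|\le L_h\|w_1-w_2\|$ and $\|H(0,y)\|\le L_h$ for all $w_1,w_2,y$. *)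

(* Defs.v *)
From HB Require Import structures.
From mathcomp Require Import all_boot all_order all_algebra.
From mathcomp Require Import reals.
From Stdlib Require Import ClassicalEpsilon.
Set Implicit Arguments. Unset Strict Implicit. Unset Printing Implicit Defensive.
Import Order.TTheory GRing.Theory Num.Theory.
Local Open Scope ring_scope.

Section Defs.
Variables (R : realType) (Y : finType).

Definition ymat := Y -> Y -> R.

Definition ymul (A B : ymat) : ymat := fun x z => \sum_(y : Y) A x y * B y z.

Fixpoint ypow (A : ymat) (n : nat) : ymat :=
  match n with
  | 0 => fun x y => (x == y)%:R
  | n.+1 => ymul (ypow A n) A
  end.

Definition ysub (A B : ymat) : ymat := fun x y => A x y - B x y.

Definition stochastic (P : ymat) : Prop :=
  (forall x y, 0 <= P x y) /\ (forall x, \sum_(y : Y) P x y = 1).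

Definition irreducible (P : ymat) : Prop :=
  forall x y, exists n : nat, 0 < ypow P n x y.

(* every state has period 1: the only common divisor of the return times
   {n >= 1 : P^n(x,x) > 0} is 1, i.e. their gcd is 1 *)
Definition aperiodic (P : ymat) : Prop :=
  forall x : Y, forall k : nat,
    (forall n : nat, (0 < n)%N -> 0 < ypow P n x x -> (k %| n)%N) -> k = 1%N.

(* P lies in the closure of the family {Pw w} (entrywise / any norm topology) *)
Definition in_closure (V : Type) (Pw : V -> ymat) (P : ymat) : Prop :=
  forall e : R, 0 < e -> exists w, forall x y, `|Pw w x y - P x y| < e.

Definition is_stationary (P : ymat) (d : Y -> R) : Prop :=
  (forall y, 0 <= d y) /\ \sum_(y : Y) d y = 1 /\
  (forall z, \sum_(y : Y) d y * P y z = d z).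

(* the (unique, under (M)) stationary distribution, chosen by epsilon *)
Definition stat_dist (P : ymat) : Y -> R :=
  epsilon (inhabits (fun _ => 0)) (fun d => is_stationary P d).

Definition matrix_norm (mn : ymat -> R) : Prop :=
  (forall A, 0 <= mn A) /\
  (forall A, mn A = 0 -> forall x y, A x y = 0) /\
  (forall (c : R) A, mn (fun x y => c * A x y) = `|c| * mn A) /\
  (forall A B, mn (fun x y => A x y + B x y) <= mn A + mn B).

End Defs.

Section IP.
Variables (R : realType) (d : nat).

Definition inner_product (ip : 'rV[R]_d -> 'rV[R]_d -> R) : Prop :=
  (forall x y, ip x y = ip y x) /\
  (forall x y z, ip (x + y) z = ip x z + ip y z) /\
  (forall (c : R) x y, ip (c *: x) y = c * ip x y) /\
  (forall x, x != 0 -> 0 < ip x x).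

Definition ipnorm (ip : 'rV[R]_d -> 'rV[R]_d -> R) (x : 'rV[R]_d) : R :=
  Num.sqrt (ip x x).

End IP.

Definition hmean (R : realType) (Y : finType) (d : nat)
  (Pw : 'rV[R]_d -> ymat R Y) (H : 'rV[R]_d -> Y -> 'rV[R]_d) (w : 'rV[R]_d)
  : 'rV[R]_d :=
  \sum_(y : Y) stat_dist (Pw w) y *: H w y.

(* Main.v *)
Require Import Defs.
From HB Require Import structures.
From mathcomp Require Import all_boot all_order all_algebra.
From mathcomp Require Import reals.
From mathcomp Require Import all_classical all_reals all_analysis.
From Stdlib Require Import ClassicalEpsilon.
From mathcomp Require Import lra ring.
Import Order.TTheory GRing.Theory Num.Theory.
Import numFieldNormedType.Exports.
Local Open Scope ring_scope.


Section Markov.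
Variables (R : realType) (Y : finType).

Lemma abs_fix (P : ymat R Y) (x : Y -> R) : stochastic P ->
  (forall z, \sum_y x y * P y z = x z) ->
  forall z, \sum_y `|x y| * P y z = `|x z|.
Proof.
move=> [P0 P1] fx.
have le z : `|x z| <= \sum_y `|x y| * P y z.
  rewrite -{1}fx; apply: le_trans (ler_norm_sum _ _ _) _.
  by apply: ler_sum => y _; rewrite normrM (ger0_norm (P0 _ _)).
have tot : \sum_z (\sum_y `|x y| * P y z - `|x z|) = 0.
  rewrite sumrB exchange_big /=.
  under eq_bigr => y _ do rewrite -mulr_sumr P1 mulr1.
  by rewrite subrr.
move=> z; apply/eqP; rewrite -subr_eq0; apply/eqP.
have := psumr_eq0P _ tot; apply => // u _; by rewrite subr_ge0.
Qed.

Lemma ypow_ge0 (P : ymat R Y) : (forall x y, 0 <= P x y) -> forall n x y, 0 <= ypow P n x y.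
Proof.
move=> P0; elim=> [|n IH] x y /=; first by rewrite ler0n.
rewrite /ymul; apply: sumr_ge0 => u _; exact: mulr_ge0.
Qed.

Lemma fix_pow (P : ymat R Y) (v : Y -> R) : (forall z, \sum_y v y * P y z = v z) ->
  forall n z, \sum_y v y * ypow P n y z = v z.
Proof.
move=> fv; elim=> [|n IH] z /=.
  rewrite (bigD1 z) //= eqxx mulr1 big1 ?addr0 // => y /negbTE yz.
  by rewrite yz mulr0.
rewrite /ymul.
under eq_bigr => y _ do rewrite mulr_sumr.
rewrite exchange_big /=.
under eq_bigr => u _ do (under eq_bigr => y _ do rewrite mulrA; rewrite -mulr_suml IH).
exact: fv.
Qed.

Lemma irr_zero (P : ymat R Y) (x : Y -> R) : stochastic P -> irreducible P ->
  (forall z, \sum_y x y * P y z = x z) -> \sum_y x y = 0 -> forall y, x y = 0.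
Proof.
move=> sP iP fx sx.
have fa := @abs_fix P x sP fx.
pose v y := x y + `|x y|.
have v0 y : 0 <= v y by have h := ler_norm (- x y); rewrite normrN in h; rewrite /v; lra.
have fv z : \sum_y v y * P y z = v z.
  rewrite /v; under eq_bigr => y _ do rewrite mulrDl.
  by rewrite big_split /= fx fa.
have pos : forall y, 0 < x y -> forall z, 0 < x z.
  move=> y xy z; have [n hn] := iP y z.
  have fvn := @fix_pow P v fv n z.
  have : v y * ypow P n y z <= v z.
    rewrite -fvn (bigD1 y) //= lerDl; apply: sumr_ge0 => u _.
    by apply: mulr_ge0 => //; apply: ypow_ge0; case: sP.
  have vy : 0 < v y by rewrite /v gtr0_norm // addr_gt0.
  move=> h; have : 0 < v z by apply: lt_le_trans h; exact: mulr_gt0.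
  rewrite /v; have [xz|xz] := leP (x z) 0; last by [].
  by rewrite ler0_norm // subrr ltxx.
have allle : forall y, x y <= 0.
  move=> y; rewrite leNgt; apply/negP => xy.
  have : 0 < \sum_y x y.
    rewrite (bigD1 y) //=; apply: ltr_pwDl => //.
    by apply: sumr_ge0 => u _; apply: ltW; exact: pos xy u.
  by rewrite sx ltxx.
have : \sum_y (- x y) = 0 by rewrite sumrN sx oppr0.
move=> h y; apply/eqP; rewrite -oppr_eq0; apply/eqP.
have nn : forall u : Y, true -> 0 <= - x u by move=> u _; rewrite oppr_ge0.
exact: (psumr_eq0P nn h).
Qed.
End Markov.


Section Stat.
Variables (R : realType) (Y : finType).

Lemma sum_enum (F : Y -> R) : \sum_(i < #|Y|) F (enum_val i) = \sum_y F y.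
Proof.
rewrite (reindex (@enum_rank Y)) /=; last first.
  by exists enum_val => i _; [rewrite enum_rankK | rewrite enum_valK].
by apply: eq_bigr => y _; rewrite enum_rankK.
Qed.

Lemma exists_fix (P : ymat R Y) : stochastic P -> Y ->
  exists x : Y -> R, (exists y, x y != 0) /\ forall z, \sum_y x y * P y z = x z.
Proof.
move=> [P0 P1] y0.
pose M : 'M[R]_#|Y| := \matrix_(i, j) ((i == j)%:R - P (enum_val i) (enum_val j)).
have dM : \det M == 0.
  rewrite -det_tr; apply/det0P; exists (const_mx 1).
    apply/negP => /eqP /matrixP /(_ ord0 (enum_rank y0)); rewrite !mxE => /eqP.
    by rewrite oner_eq0.
  apply/matrixP => i j; rewrite !mxE.
  under eq_bigr => k _ do rewrite !mxE mul1r.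
  rewrite sumrB (bigD1 j) //= eqxx big1 ?addr0; last first.
    by move=> k /negbTE; rewrite eq_sym => ->.
  by rewrite (sum_enum (fun y => P (enum_val j) y)) P1 subrr.
have [v v0 vM] := det0P dM.
exists (fun y => v ord0 (enum_rank y)); split.
  case: (pickP (fun j => v ord0 j != 0)) => [j hj|H].
    by exists (enum_val j); rewrite enum_valK.
  exfalso; move/negP: v0; apply; apply/eqP/matrixP => i j.
  by rewrite (ord1 i) mxE; move: (H j) => /= /negbFE /eqP.
move=> z; have := congr1 (fun m : 'rV[R]_#|Y| => m ord0 (enum_rank z)) vM; rewrite /= !mxE /M.
rewrite (eq_bigr (fun k => v ord0 k * (k == enum_rank z)%:R - v ord0 k * P (enum_val k) (enum_val (enum_rank z)))); last first.
  by move=> k _; rewrite mxE mulrBr.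
rewrite sumrB (bigD1 (enum_rank z)) //= eqxx mulr1 big1 ?addr0; last first.
  by move=> k /negbTE ->; rewrite mulr0.
rewrite enum_rankK => /eqP; rewrite subr_eq0 => /eqP ->.
by rewrite -(sum_enum (fun y => v ord0 (enum_rank y) * P y z)); apply: eq_bigr => k _; rewrite enum_valK.
Qed.

Lemma stat_exists (P : ymat R Y) : stochastic P -> Y -> is_stationary P (stat_dist P).
Proof.
move=> sP y0; rewrite /stat_dist; apply: epsilon_spec.
have [x [[y xy] fx]] := @exists_fix P sP y0.
have fa := @abs_fix _ _ P x sP fx.
set s := \sum_y `|x y|.
have s0 : 0 < s.
  rewrite /s (bigD1 y) //=; apply: ltr_pwDl; first by rewrite normr_gt0.
  by apply: sumr_ge0 => u _.
exists (fun y => `|x y| / s); split; [|split].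
- by move=> u; apply: divr_ge0 => //; exact: ltW.
- by rewrite -mulr_suml divff // gt_eqF.
- move=> z; rewrite -(fa z) mulr_suml; apply: eq_bigr => u _; rewrite mulrAC.
  done.
Qed.
End Stat.


Section IPN.
Variables (R : realType) (d : nat) (ip : 'rV[R]_d -> 'rV[R]_d -> R).
Hypothesis hip : inner_product ip.

Lemma ip0l y : ip 0 y = 0.
Proof.
case: hip => _ [hD _].
have := hD 0 0 y; rewrite addr0 => h; lra.
Qed.

Lemma ipZr c x y : ip x (c *: y) = c * ip x y.
Proof. case: hip => hS [_ [hZ _]]; by rewrite hS hZ hS. Qed.

Lemma ipDr x y z : ip x (y + z) = ip x y + ip x z.
Proof. case: hip => hS [hD _]; by rewrite hS hD !(hS x). Qed.

Lemma ipxx_ge0 x : 0 <= ip x x.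
Proof.
case: hip => _ [_ [_ hP]].
have [->|x0] := eqVneq x 0; first by rewrite ip0l.
exact: ltW (hP _ x0).
Qed.

Lemma ipnorm_ge0 x : 0 <= ipnorm ip x.
Proof. exact: sqrtr_ge0. Qed.

Lemma ipnormZ c x : ipnorm ip (c *: x) = `|c| * ipnorm ip x.
Proof.
case: hip => hS [_ [hZ _]].
rewrite /ipnorm hZ ipZr mulrA -expr2 sqrtrM ?sqr_ge0 // sqrtr_sqr //.
Qed.

Lemma ipnormN x : ipnorm ip (- x) = ipnorm ip x.
Proof. by rewrite -scaleN1r ipnormZ normrN normr1 mul1r. Qed.

Lemma ipnorm0 : ipnorm ip 0 = 0.
Proof. by rewrite /ipnorm ip0l sqrtr0. Qed.

Lemma cauchy_schwarz x y : ip x y ^+ 2 <= ip x x * ip y y.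
Proof.
case: hip => hS [hD [hZ _]].
have q t : 0 <= ip x x + 2 * t * ip x y + t ^+ 2 * ip y y.
  have := ipxx_ge0 (x + t *: y).
  rewrite hD !ipDr !hZ !ipZr (hS y x); congr (0 <= _); ring.
set a := ip x x in q *; set b := ip x y in q *; set c := ip y y in q *.
have a0 : 0 <= a := ipxx_ge0 x. have c0 : 0 <= c := ipxx_ge0 y.
have [c00|cpos] := eqVneq c 0.
  rewrite c00 mulr0 in q *.
  have [b00|bn] := eqVneq b 0; first by rewrite b00 expr0n.
  have := q (- (a + 1) / (2 * b)).
  have -> : 2 * (- (a + 1) / (2 * b)) * b = - (a + 1).
    by field; rewrite bn.
  rewrite ?addr0; lra.
have cp : 0 < c by rewrite lt_def cpos c0.
have := q (- b / c).
have -> : a + 2 * (- b / c) * b + (- b / c) ^+ 2 * c = (a * c - b ^+ 2) / c.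
  by field; rewrite cpos.
by rewrite pmulr_lge0 ?invr_gt0 // subr_ge0 mulrC.
Qed.

Lemma ipnormD x y : ipnorm ip (x + y) <= ipnorm ip x + ipnorm ip y.
Proof.
case: hip => hS [hD [hZ _]].
rewrite -(ler_pXn2r (n := 2)) // ?nnegrE ?addr_ge0 ?ipnorm_ge0 //.
rewrite /ipnorm sqr_sqrtr ?ipxx_ge0 // hD !ipDr (hS y x).
rewrite sqrrD !sqr_sqrtr ?ipxx_ge0 //.
have : ip x y <= Num.sqrt (ip x x) * Num.sqrt (ip y y).
  rewrite -sqrtrM ?ipxx_ge0 //; apply: le_trans (ler_norm _) _.
  rewrite -sqrtr_sqr; apply: ler_wsqrtr; exact: cauchy_schwarz.
lra.
Qed.

Lemma ipnormB x y : ipnorm ip (x - y) <= ipnorm ip x + ipnorm ip y.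
Proof. by rewrite -(ipnormN y); exact: ipnormD. Qed.

Lemma ipnorm_sum (I : Type) (s : seq I) (F : I -> 'rV[R]_d) :
  ipnorm ip (\sum_(i <- s) F i) <= \sum_(i <- s) ipnorm ip (F i).
Proof.
elim: s => [|a s IH]; first by rewrite !big_nil ipnorm0.
rewrite !big_cons; apply: le_trans (ipnormD _ _) _; exact: lerD.
Qed.
End IPN.


Section Topo.
Local Open Scope classical_set_scope.
Variable R : realType.

Lemma cont_ball n (g : 'rV[R]_n -> R) :
  (forall (p : 'rV[R]_n) (e : R), 0 < e -> exists2 d : R, 0 < d & forall q : 'rV[R]_n, (forall i, `|p ord0 i - q ord0 i| < d) -> `|g p - g q| < e) -> continuous g.
Proof.
move=> H p B /nbhs_ballP [e e0 Be].
have [d d0 Hd] := H p e e0.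
exists (fun i0 j => ball (p i0 j) d).
  by move=> i0 j; apply: nbhsx_ballx.
move=> q Bq; apply: Be; rewrite /ball /=.
apply: Hd => i; move: (Bq ord0 i); by rewrite /ball /=.
Qed.

Lemma cont_coord n (i : 'I_n) : continuous (fun v : 'rV[R]_n => v ord0 i).
Proof. exact: coord_continuous. Qed.
Lemma cont_mul n (f g : 'rV[R]_n -> R) : continuous f -> continuous g -> continuous (fun v => f v * g v).
Proof. move=> cf cg x; exact: (continuousM (cf x) (cg x)). Qed.
Lemma cont_add n (f g : 'rV[R]_n -> R) : continuous f -> continuous g -> continuous (fun v => f v + g v).
Proof. move=> cf cg x; exact: (continuousD (cf x) (cg x)). Qed.
Lemma cont_opp n (f : 'rV[R]_n -> R) : continuous f -> continuous (fun v => - f v).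
Proof. move=> cf x; exact: (continuousN (cf x)). Qed.
Lemma cont_abs n (f : 'rV[R]_n -> R) : continuous f -> continuous (fun v => `|f v|).
Proof. move=> cf x. apply: continuous_comp; [exact: cf| exact: norm_continuous]. Qed.
Lemma cont_cst n (c : R) : continuous (fun v : 'rV[R]_n => c).
Proof. move=> x; exact: cst_continuous. Qed.
Lemma cont_sum n (I : Type) (s : seq I) (F : I -> 'rV[R]_n -> R) :
  (forall i, continuous (F i)) -> continuous (fun v => \sum_(i <- s) F i v).
Proof.
move=> cF; elim: s => [|a s IH].
  have -> : (fun v : 'rV[R]_n => \sum_(i <- [::]) F i v) = (fun=> 0) by apply: funext => v; rewrite big_nil.
  exact: cont_cst.
have -> : (fun v => \sum_(i <- a :: s) F i v) = (fun v => F a v + \sum_(i <- s) F i v).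
  by apply: funext => v; rewrite big_cons.
exact: cont_add.
Qed.

Lemma closure_approx n (S : set 'rV[R]_n) (p : 'rV[R]_n) (e : R) : closure S p -> 0 < e ->
  exists u, S u /\ forall i, `|p ord0 i - u ord0 i| < e.
Proof.
move=> cl e0.
have [u [Su Bu]] : S `&` [set u : 'rV[R]_n | forall i, `|p ord0 i - u ord0 i| < e] !=set0.
  apply: cl; exists (fun i0 j => ball (p i0 j) e).
    by move=> i0 j; apply: nbhsx_ballx.
  move=> q Bq i; move: (Bq ord0 i); by rewrite /ball /=.
by exists u.
Qed.

Lemma closed_preim_eq n (g : 'rV[R]_n -> R) (c : R) : continuous g -> closed [set v | g v = c].
Proof. move=> cg; have h := (continuous_closedP g).1 cg _ (@closed_eq _ c). exact h. Qed.

Lemma closed_preim_le n (g : 'rV[R]_n -> R) (c : R) : continuous g -> closed [set v | g v <= c].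
Proof. move=> cg; exact: ((continuous_closedP g).1 cg _ (@closed_le _ c)). Qed.

Lemma closure_in n (S C : set 'rV[R]_n) : closed C -> S `<=` C -> closure S `<=` C.
Proof. by move=> cC SC; rewrite [X in _ `<=` X](closure_id C).1 //; exact: closureS. Qed.

Lemma compact_closure_box n (S : set 'rV[R]_n) :
  (forall v, S v -> forall i, `|v ord0 i| <= 1) -> compact (closure S).
Proof.
move=> Sb.
have cB := @rV_compact R n (fun=> `[(-1 : R), 1]%classic) (fun _ => @segment_compact R (-1) 1).
apply: subclosed_compact cB _; first exact: closed_closure.
move=> p cp i /=.
have : `|p ord0 i| <= 1.
  apply/ler_addgt0Pr => e e0.
  have [u [Su Hu]] := @closure_approx n S p e cp e0.
  have := Sb _ Su i; have := Hu i.
  have h := ler_normD (u ord0 i) (p ord0 i - u ord0 i).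
  rewrite addrC subrK in h.
  move=> h1 h2; lra.
by rewrite in_itv /= -ler_norml.
Qed.
End Topo.


Section Unif.
Local Open Scope classical_set_scope.
Variables (R : realType) (Y : finType) (V : Type).

Definition Fo (P : ymat R Y) (x : Y -> R) : R :=
  \sum_z `|x z - \sum_y x y * P y z| + `|\sum_y x y|.

Lemma Fo_ge0 P x : 0 <= Fo P x.
Proof. by apply: addr_ge0 => //; apply: sumr_ge0. Qed.

Lemma FoZ P x (k : R) : Fo P (fun y => k * x y) = `|k| * Fo P x.
Proof.
rewrite /Fo mulrDr; congr (_ + _); last by rewrite -mulr_sumr normrM.
rewrite mulr_sumr; apply: eq_bigr => z _; rewrite -normrM mulrBr mulr_sumr.
by congr `|_ - _|; apply: eq_bigr => y _; rewrite mulrA.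
Qed.

Let n1 := #|{: option Y * Y}|.
Let idxP (y z : Y) : 'I_n1 := enum_rank (Some y, z).
Let idxX (y : Y) : 'I_n1 := enum_rank (None, y).
Let Pm (v : 'rV[R]_n1) : ymat R Y := fun y z => v ord0 (idxP y z).
Let Xv (v : 'rV[R]_n1) : Y -> R := fun y => v ord0 (idxX y).
Let enc (P : ymat R Y) (x : Y -> R) : 'rV[R]_n1 :=
  \row_i (match enum_val i with (Some y, z) => P y z | (None, z) => x z end).

Let PmE P x : Pm (enc P x) = P.
Proof. by apply: funext => y; apply: funext => z; rewrite /Pm /enc mxE /idxP enum_rankK. Qed.
Let XvE P x : Xv (enc P x) = x.
Proof. by apply: funext => y; rewrite /Xv /enc mxE /idxX enum_rankK. Qed.

Lemma stoch_le1 (P : ymat R Y) y z : stochastic P -> P y z <= 1.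
Proof.
move=> [P0 P1]; rewrite -(P1 y) (bigD1 z) //= lerDl.
by apply: sumr_ge0.
Qed.

Lemma abs_le_sum (x : Y -> R) y : `|x y| <= \sum_u `|x u|.
Proof. by rewrite (bigD1 y) //= lerDl; apply: sumr_ge0. Qed.


Lemma uniform_c (Pw : V -> ymat R Y) (w0 : V) :
  (forall w, stochastic (Pw w)) ->
  (forall P, in_closure Pw P -> irreducible P /\ aperiodic P) ->
  exists2 c : R, 0 < c & forall w (x : Y -> R), c * \sum_y `|x y| <= Fo (Pw w) x.
Proof.
move=> sPw hcl.
case: (pickP (@predT Y)) => [y0 _|Y0]; last first.
  exists 1 => // w x; rewrite big1 ?mulr0 ?Fo_ge0 //.
  by move=> y; have := Y0 y.
pose S := [set v : 'rV[R]_n1 | exists w, (forall y z, Pm v y z = Pw w y z) /\ \sum_y `|Xv v y| = 1].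
have Sb : forall v, S v -> forall i, `|v ord0 i| <= 1.
  move=> v [w [hP hX]] i; rewrite -(enum_valK i).
  case: (enum_val i) => [[y|] z].
  - have := hP y z; rewrite /Pm /idxP => ->.
    case: (sPw w) => P0 _; rewrite ger0_norm //; exact: stoch_le1.
  - by rewrite -hX; have := abs_le_sum (Xv v) z.
pose f (v : 'rV[R]_n1) := Fo (Pm v) (Xv v).
have cXv : forall y, continuous (fun v : 'rV[R]_n1 => Xv v y) by move=> y; exact: cont_coord.
have cPm : forall y z, continuous (fun v : 'rV[R]_n1 => Pm v y z) by move=> y z; exact: cont_coord.
have cf : continuous f.
  rewrite /f /Fo; apply: cont_add.
    apply: cont_sum => z; apply: cont_abs; apply: cont_add => //.
    apply: cont_opp; apply: cont_sum => y; exact: cont_mul.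
  by apply: cont_abs; apply: cont_sum.
have cK := @compact_closure_box R n1 S Sb.
have K0 : closure S !=set0.
  exists (enc (Pw w0) (fun y => (y == y0)%:R)); apply: subset_closure.
  exists w0; split; first by move=> y z; rewrite PmE.
  rewrite XvE (bigD1 y0) //= eqxx normr1 big1 ?addr0 // => y /negbTE ->.
  by rewrite normr0.
have [p pK pmin] := compact_EVT_min K0 cK (continuous_subspaceT cf).
move: pK; rewrite inE => pK.
exists (f p); last first.
  move=> w x; set s := \sum_y `|x y|.
  have s0 : 0 <= s by apply: sumr_ge0.
  have [->|sn] := eqVneq s 0; first by rewrite mulr0 Fo_ge0.
  have sp : 0 < s by rewrite lt_def sn s0.
  have hv : closure S (enc (Pw w) (fun y => s^-1 * x y)).
    apply: subset_closure; exists w; split; first by move=> y z; rewrite PmE.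
    have si : 0 <= s^-1 by rewrite invr_ge0.
    rewrite XvE; under eq_bigr => y _ do rewrite normrM (ger0_norm si).
    by rewrite -mulr_sumr mulVf.
  have := pmin _ (mem_set hv); rewrite /f PmE XvE FoZ ger0_norm ?invr_ge0 //.
  by rewrite ler_pdivlMl // mulrC.
set Ps := Pm p; set xs := Xv p.
have sum1 : \sum_y `|xs y| = 1.
  have : closure S `<=` [set v | \sum_y `|Xv v y| = 1].
    apply: closure_in; last by move=> v [w []].
    apply: closed_preim_eq; apply: cont_sum => y; exact: cont_abs.
  by move/(_ p pK).
have Ps0 : forall y z, 0 <= Ps y z.
  move=> y z.
  have : closure S `<=` [set v | - Pm v y z <= 0].
    apply: closure_in; first by apply: closed_preim_le; exact: cont_opp.
    move=> v [w [hP _]] /=; rewrite hP oppr_le0; by case: (sPw w).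
  by move/(_ p pK) => /=; rewrite oppr_le0.
have Ps1 : forall y, \sum_z Ps y z = 1.
  move=> y.
  have : closure S `<=` [set v | \sum_z Pm v y z = 1].
    apply: closure_in; first by apply: closed_preim_eq; exact: cont_sum.
    move=> v [w [hP _]] /=; under eq_bigr => z _ do rewrite hP. by case: (sPw w).
  by move/(_ p pK).
have clP : in_closure Pw Ps.
  move=> e e0; have [u [[w [hP _]] hu]] := @closure_approx _ _ S p e pK e0.
  exists w => y z; rewrite -hP distrC; exact: hu.
have [iP _] := hcl _ clP.
rewrite lt_def Fo_ge0 andbT; apply/negP => /eqP fp0.
have [t1 t2] : \sum_z `|xs z - \sum_y xs y * Ps y z| = 0 /\ `|\sum_y xs y| = 0.
  have a0 : 0 <= \sum_z `|xs z - \sum_y xs y * Ps y z| by apply: sumr_ge0.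
  have b0 : 0 <= `|\sum_y xs y| by [].
  move: fp0; rewrite /f /Fo -/Ps -/xs => h; split; lra.
have fx : forall z, \sum_y xs y * Ps y z = xs z.
  move=> z; have nn : forall u : Y, true -> 0 <= `|xs u - \sum_y xs y * Ps y u| by [].
  have := psumr_eq0P nn t1 (i := z) isT; move/eqP; rewrite normr_eq0 subr_eq0 => /eqP ->.
  done.
have sx : \sum_y xs y = 0 by apply/eqP; rewrite -normr_eq0; apply/eqP.
have z0 := @irr_zero R Y Ps xs (conj Ps0 Ps1) iP fx sx.
move: sum1; rewrite big1 => [/eqP|y _]; first by rewrite eq_sym oner_eq0.
by rewrite z0 normr0.
Qed.
End Unif.


Section NormEq.
Local Open Scope classical_set_scope.
Variables (R : realType) (Y : finType) (mn : ymat R Y -> R).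
Hypothesis hmn : matrix_norm mn.

Lemma mn0 : mn (fun _ _ => 0) = 0.
Proof.
case: hmn => _ [_ [hZ _]].
have h := hZ 0 (fun _ _ => 0).
have e : (fun x y : Y => (0:R) * (fun _ _ => (0:R)) x y) = (fun _ _ => 0).
  by apply: funext => x; apply: funext => y; rewrite mulr0.
by rewrite e in h; rewrite h normr0 mul0r.
Qed.

Lemma mn_sum (I : Type) (s : seq I) (F : I -> ymat R Y) :
  mn (fun a b => \sum_(i <- s) F i a b) <= \sum_(i <- s) mn (F i).
Proof.
case: hmn => _ [_ [_ hT]].
elim: s => [|i s IH].
  have -> : (fun a b : Y => \sum_(i <- [::]) F i a b) = (fun _ _ => 0).
    by apply: funext => x; apply: funext => y; rewrite big_nil.
  by rewrite mn0 big_nil.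
have -> : (fun a b : Y => \sum_(j <- i :: s) F j a b) = (fun a b => F i a b + \sum_(j <- s) F j a b).
  by apply: funext => x; apply: funext => y; rewrite big_cons.
rewrite big_cons; apply: le_trans (hT _ _) _; exact: lerD.
Qed.

Definition Emx (p : Y * Y) : ymat R Y := fun a b => ((a == p.1) && (b == p.2))%:R.

Lemma mn_le (A : ymat R Y) : mn A <= \sum_(p : Y * Y) `|A p.1 p.2| * mn (Emx p).
Proof.
case: hmn => _ [_ [hZ _]].
have eA : A = (fun a b => \sum_(p : Y * Y) A p.1 p.2 * Emx p a b).
  apply: funext => a; apply: funext => b.
  rewrite (bigD1 (a, b)) //= /Emx /= !eqxx mulr1 big1 ?addr0 // => [[y z]] /=.
  by rewrite xpair_eqE [a == y]eq_sym [b == z]eq_sym => /negbTE ->; rewrite mulr0.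
rewrite [X in mn X]eA; apply: le_trans (mn_sum _ _ _) _; apply: ler_sum => p _.
by rewrite hZ.
Qed.

Lemma mn_lip (A B : ymat R Y) : `|mn A - mn B| <= \sum_(p : Y * Y) `|A p.1 p.2 - B p.1 p.2| * mn (Emx p).
Proof.
case: hmn => _ [_ [hZ hT]].
have e1 : A = (fun a b => B a b + (A a b - B a b)).
  by apply: funext => a; apply: funext => b; rewrite addrC subrK.
have e2 : B = (fun a b => A a b + (B a b - A a b)).
  by apply: funext => a; apply: funext => b; rewrite addrC subrK.
have h1 : mn A <= mn B + mn (fun a b => A a b - B a b) by rewrite {1}e1; exact: hT.
have h2 : mn B <= mn A + mn (fun a b => B a b - A a b) by rewrite {1}e2; exact: hT.
have l1 := mn_le (fun a b => A a b - B a b).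
have l2 := mn_le (fun a b => B a b - A a b).
have eq : \sum_(p : Y * Y) `|B p.1 p.2 - A p.1 p.2| * mn (Emx p) = \sum_(p : Y * Y) `|A p.1 p.2 - B p.1 p.2| * mn (Emx p).
  by apply: eq_bigr => p _; rewrite distrC.
rewrite /= eq in l2; move: l1 => /= l1.
rewrite ler_norml; apply/andP; split; lra.
Qed.

Let n2 := #|{: Y * Y}|.
Let Am (v : 'rV[R]_n2) : ymat R Y := fun y z => v ord0 (enum_rank (y, z)).
Let encA (A : ymat R Y) : 'rV[R]_n2 := \row_i A (enum_val i).1 (enum_val i).2.
Let AmE A : Am (encA A) = A.
Proof. by apply: funext => y; apply: funext => z; rewrite /Am /encA mxE enum_rankK. Qed.

Lemma norm_equiv : exists2 K : R, 0 <= K &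
  forall A : ymat R Y, \sum_(p : Y * Y) `|A p.1 p.2| <= K * mn A.
Proof.
have mnge0 : forall A, 0 <= mn A by case: hmn.
case: (pickP (@predT (Y * Y)%type)) => [q0 _|Y0]; last first.
  exists 0 => // A; rewrite mul0r big1 // => p; by have := Y0 p.
pose S := [set v : 'rV[R]_n2 | \sum_(p : Y * Y) `|Am v p.1 p.2| = 1].
have Sb : forall v, S v -> forall i, `|v ord0 i| <= 1.
  move=> v hv i; rewrite -hv -(enum_valK i).
  move: (enum_val i) => [y z].
  by have := @abs_le_sum R (Y * Y)%type (fun p => Am v p.1 p.2) (y, z).
have cS : closure S `<=` S.
  apply: closure_in => //; apply: closed_preim_eq; apply: cont_sum => p.
  apply: cont_abs; exact: cont_coord.
have cK := @compact_closure_box R n2 S Sb.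
pose Cm := \sum_(p : Y * Y) mn (Emx p).
have Cm0 : 0 <= Cm by apply: sumr_ge0.
have cg : continuous (fun v => mn (Am v)).
  apply: cont_ball => p e e0.
  exists (e / (Cm + 1)); first by apply: divr_gt0 => //; lra.
  move=> q hq; apply: le_lt_trans (mn_lip _ _) _.
  apply: (@le_lt_trans _ _ (\sum_(p0 : Y * Y) e / (Cm + 1) * mn (Emx p0))).
    apply: ler_sum => p0 _; apply: ler_wpM2r => //; apply: ltW; exact: hq.
  rewrite -mulr_sumr -/Cm mulrAC ltr_pdivrMr; last by lra.
  by rewrite mulrDr mulr1 ltrDl.
have K0 : closure S !=set0.
  exists (encA (fun a b => ((a == q0.1) && (b == q0.2))%:R)); apply: subset_closure.
  rewrite /S /= AmE (bigD1 q0) //= !eqxx normr1 big1 ?addr0 // => [[y z]] /=.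
  move=> /negbTE h; rewrite (_ : (y == q0.1) && (z == q0.2) = false) ?normr0 //.
have [p pK pmin] := compact_EVT_min K0 cK (continuous_subspaceT cg).
move: pK; rewrite inE => /cS pS.
have c2 : 0 < mn (Am p).
  rewrite lt_def mnge0 andbT; apply/negP => /eqP h.
  case: hmn => _ [hz _]; have z := hz _ h.
  move: pS; rewrite /S /= big1 => [/eqP|q _]; first by rewrite eq_sym oner_eq0.
  by rewrite z normr0.
exists (mn (Am p))^-1; first by rewrite invr_ge0 ltW.
move=> A; set s := \sum_(q : Y * Y) `|A q.1 q.2|.
have s0 : 0 <= s by apply: sumr_ge0.
have [->|sn] := eqVneq s 0; first by apply: mulr_ge0 => //; rewrite invr_ge0 ltW.
have sp : 0 < s by rewrite lt_def sn s0.
have si : 0 <= s^-1 by rewrite invr_ge0.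
have hv : closure S (encA (fun a b => s^-1 * A a b)).
  apply: subset_closure; rewrite /S /= AmE.
  under eq_bigr => q _ do rewrite normrM (ger0_norm si).
  by rewrite -mulr_sumr mulVf.
have := pmin _ (mem_set hv); rewrite AmE.
case: hmn => _ [_ [hZ _]]; rewrite hZ (ger0_norm si) => h.
rewrite mulrC ler_pdivlMr //.
by rewrite mulrC -ler_pdivlMr // mulrC.
Qed.
End NormEq.

Arguments ipnorm_ge0 {R d ip}. Arguments ipnorm0 {R d ip}. Arguments ipnormZ {R d ip}.
Arguments ipnormD {R d ip}. Arguments ipnorm_sum {R d ip}.
Arguments stat_exists {R Y P}. Arguments uniform_c {R Y V Pw}. Arguments norm_equiv {R Y mn}. Arguments Fo {R Y}.

Theorem mainTheorem11 (R : realType) (d : nat) (Y : finType)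
  (ip : 'rV[R]_d -> 'rV[R]_d -> R)
  (H : 'rV[R]_d -> Y -> 'rV[R]_d)
  (Pw : 'rV[R]_d -> ymat R Y)
  (mn : ymat R Y -> R) :
  inner_product ip ->
  (* (M) *)
  (forall w, stochastic (Pw w)) ->
  (forall P : ymat R Y, in_closure Pw P -> irreducible P /\ aperiodic P) ->
  (* (P) *)
  matrix_norm mn ->
  (exists C_P : R, forall w1 w2,
      mn (ysub (Pw w1) (Pw w2))
        <= C_P / (1 + ipnorm ip w1 + ipnorm ip w2) * ipnorm ip (w1 - w2)) ->
  (* (L) *)
  (exists L_h : R, forall w1 w2 y,
      ipnorm ip (H w1 y - H w2 y) <= L_h * ipnorm ip (w1 - w2) /\
      ipnorm ip (H 0 y) <= L_h) ->
  exists L_h' : R, forall w1 w2,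
    ipnorm ip (hmean Pw H w1 - hmean Pw H w2) <= L_h' * ipnorm ip (w1 - w2).
Proof.
move=> hip sPw hcl hmn [CP hCP] [L hL].
have nge0 : forall x, 0 <= ipnorm ip x := ipnorm_ge0.
case: (pickP (@predT Y)) => [y0 _|Y0]; last first.
  exists 0 => w1 w2; rewrite /hmean !big1 ?subrr ?(ipnorm0 hip) ?mul0r // => y; by have := Y0 y.
have hst w := stat_exists (sPw w) y0.
have [c c0 hc] := uniform_c 0 sPw hcl.
have [K K0 hK] := norm_equiv hmn.
have L0 : 0 <= L by apply: le_trans (nge0 (H 0 y0)) _; case: (hL 0 0 y0).
exists (L + K / c * `|CP| * L) => w1 w2.
have [p10 [p11 p1s]] := hst w1; have [p20 [p21 p2s]] := hst w2.
set p1 := stat_dist (Pw w1) in p10 p11 p1s *; set p2 := stat_dist (Pw w2) in p20 p21 p2s *.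
set n := ipnorm ip (w1 - w2); set a1 := ipnorm ip w1; set a2 := ipnorm ip w2.
have n0 : 0 <= n := nge0 _. have a10 : 0 <= a1 := nge0 _. have a20 : 0 <= a2 := nge0 _.
pose x y := p1 y - p2 y.
have -> : hmean Pw H w1 - hmean Pw H w2 =
    \sum_y p1 y *: (H w1 y - H w2 y) + \sum_y x y *: H w2 y.
  rewrite /hmean -big_split -sumrB /=; apply: eq_bigr => y _.
  by rewrite /x scalerBr scalerBl addrA subrK.
apply: le_trans (ipnormD hip _ _) _.
have t1 : ipnorm ip (\sum_y p1 y *: (H w1 y - H w2 y)) <= L * n.
  apply: le_trans (ipnorm_sum hip _ _ _) _.
  apply: (@le_trans _ _ (\sum_y p1 y * (L * n))).
    apply: ler_sum => y _; rewrite ipnormZ // ger0_norm //; apply: ler_wpM2l => //.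
    by case: (hL w1 w2 y).
  by rewrite -mulr_suml p11 mul1r.
have hH y : ipnorm ip (H w2 y) <= L * (1 + a2).
  have e : H w2 y = (H w2 y - H 0 y) + H 0 y by rewrite subrK.
  rewrite e; apply: le_trans (ipnormD hip _ _) _.
  have [h1 _] := hL w2 0 y; have [_ h2] := hL 0 0 y.
  rewrite subr0 -/a2 in h1; lra.
set D := ysub (Pw w1) (Pw w2).
have sx : \sum_y x y = 0 by rewrite /x sumrB p11 p21 subrr.
have xz z : x z - \sum_y x y * Pw w2 y z = \sum_y p1 y * D y z.
  have e1 : \sum_y x y * Pw w2 y z = \sum_y p1 y * Pw w2 y z - p2 z.
    by rewrite -(p2s z) -sumrB; apply: eq_bigr => y _; rewrite /x mulrBl.
  have e2 : \sum_y p1 y * D y z = p1 z - \sum_y p1 y * Pw w2 y z.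
    by rewrite -(p1s z) -sumrB; apply: eq_bigr => y _; rewrite /D /ysub mulrBr.
  rewrite e1 e2 /x; ring.
have Fob : Fo (Pw w2) x <= \sum_(q : Y * Y) `|D q.1 q.2|.
  rewrite /Fo sx normr0 addr0.
  under eq_bigr => z _ do rewrite xz.
  rewrite -(pair_big xpredT xpredT (fun a b => `|D a b|)) /= exchange_big /=.
  apply: ler_sum => z _; apply: le_trans (ler_norm_sum _ _ _) _.
  apply: ler_sum => y _; rewrite normrM (ger0_norm (p10 y)).
  rewrite -[leRHS]mul1r; apply: ler_wpM2r => //.
  rewrite -p11 (bigD1 y) //= lerDl; exact: sumr_ge0.
have hx : c * \sum_y `|x y| <= K * (CP / (1 + a1 + a2) * n).
  apply: le_trans (hc w2 x) _; apply: le_trans Fob _.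
  apply: le_trans (hK D) _; apply: ler_wpM2l => //; exact: hCP.
set sx' := \sum_y `|x y| in hx *.
have sx0 : 0 <= sx' by apply: sumr_ge0.
have t2 : ipnorm ip (\sum_y x y *: H w2 y) <= sx' * (L * (1 + a2)).
  apply: le_trans (ipnorm_sum hip _ _ _) _; rewrite mulr_suml.
  apply: ler_sum => y _; rewrite ipnormZ //; apply: ler_wpM2l => //.
set u := CP / (1 + a1 + a2) in hx.
have pos : 0 < 1 + a1 + a2 by lra.
have uCP : u * (1 + a1 + a2) = CP by rewrite /u divfK // gt_eqF.
have u1 : u * (1 + a2) <= `|CP|.
  rewrite -uCP normrM (gtr0_norm pos).
  apply: le_trans (ler_wpM2r _ (ler_norm u)) _; first lra.
  apply: ler_wpM2l => //; lra.
have key : c * (sx' * (1 + a2)) <= K * `|CP| * n.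
  rewrite mulrA; apply: le_trans (ler_wpM2r _ hx) _; first lra.
  have : K * (u * n) * (1 + a2) = K * n * (u * (1 + a2)) by ring.
  move=> ->; have -> : K * `|CP| * n = (K * n) * `|CP| by ring.
  apply: ler_wpM2l => //; exact: mulr_ge0.
have key2 : sx' * (1 + a2) <= K / c * `|CP| * n.
  have -> : K / c * `|CP| * n = (K * `|CP| * n) / c by ring.
  by rewrite ler_pdivlMr // mulrC.
have key3 : sx' * (L * (1 + a2)) <= K / c * `|CP| * L * n.
  have : sx' * (L * (1 + a2)) = L * (sx' * (1 + a2)) by ring.
  move=> ->; have : K / c * `|CP| * L * n = L * (K / c * `|CP| * n) by ring.
  move=> ->; exact: ler_wpM2l.
rewrite mulrDl; apply: lerD => //.
exact: le_trans t2 key3.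
Qed.
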